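(* Let $a,b,c,d,t,u,v$ be non-negative integers such that $2\le v\le u-1$ and $0\le t\le u-1$. Suppose there exists a $(v+1)$-RGDD of type $u^{v+1}$. Suppose also that there exist 4-GDDs of types $a^u d^1$ and $b^u d^1$, as well as a 4-GDD of type $a^v b^1 c^1$ if $tc>0$, and a 4-GDD of type $a^v b^1$ if $c=0$ or $t<u-1$. Then there exists a 4-GDD of type $(va+b)^u(ct+d)^1$.
   Context: For a positive integer $k$, a $k$-GDD of type $g_1^{u_1}\cdots g_r^{u_r}$ is a triple $(V,\mathcal G,\mathcal B)$ where $V$ is a set of $u_1g_1+\cdots+u_rg_r$ points, $\mathcal G$ is a partition of $V$ into $u_i$ groups of size $g_i$ for each $i$, and $\mathcal B$ is a non-empty collection of $k$-element subsets of $V$ (blocks) such that every pair of points from distinct groups lies in exactly one block and no pair of points from the same group lies in any block. A group size $0$ in a type contributes no group (e.g. type $a^u0^1$ means type $a^u$). A parallel class is a set of blocks partitioning $V$; a $k$-RGDD is a $k$-GDD whose blocks can be partitioned into parallel classes. *)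

(* Defs.v *)
From mathcomp Require Import all_boot.
Set Implicit Arguments. Unset Strict Implicit. Unset Printing Implicit Defensive.

(* A group type  g_1^{u_1} ... g_r^{u_r}  is encoded as the list
   [:: (g_1, u_1); ...; (g_r, u_r)].  Its multiset of (nonzero) group sizes: *)
Definition type_sizes (ty : seq (nat * nat)) : seq nat :=
  [seq g <- flatten [seq nseq p.2 p.1 | p <- ty] | 0 < g].

Definition type_points (ty : seq (nat * nat)) : nat :=
  \sum_(p <- ty) p.1 * p.2.

Definition is_GDD (k : nat) (ty : seq (nat * nat)) (T : finType)
    (G : {set {set T}}) (B : {set {set T}}) : Prop :=
  [/\ partition G [set: T],
      perm_eq [seq #|X : {set T}| | X <- enum G] (type_sizes ty),
      B != set0 /\
      (forall b, b \in B -> #|b| = k),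
      (forall x y, x != y -> pblock G x != pblock G y ->
          #|[set b in B | (x \in b) && (y \in b)]| = 1)
    & (forall x y, x != y -> pblock G x = pblock G y ->
          forall b, b \in B -> ~~ ((x \in b) && (y \in b)))].

Definition resolvable (T : finType) (B : {set {set T}}) : Prop :=
  exists P : {set {set {set T}}},
    partition P B /\ (forall C, C \in P -> partition C [set: T]).

Definition GDD_exists (k : nat) (ty : seq (nat * nat)) : Prop :=
  exists (G B : {set {set 'I_(type_points ty)}}), is_GDD k ty G B.

Definition RGDD_exists (k : nat) (ty : seq (nat * nat)) : Prop :=
  exists (G B : {set {set 'I_(type_points ty)}}),
    is_GDD k ty G B /\ resolvable B.

(* Main.v *)
Require Import Defs.
From mathcomp Require Import all_boot zify.
From mathcomp Require Import ring.
Set Implicit Arguments. Unset Strict Implicit. Unset Printing Implicit Defensive.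

Definition plgdd (X : finType) (K : eqType) (lab : X -> option K) (k : nat)
  (B : {set {set X}}) : Prop :=
 [/\ forall b, b \in B -> #|b| = k,
     forall b x, b \in B -> x \in b -> lab x != None,
     forall x y, x != y -> lab x != None -> lab y != None -> lab x != lab y ->
        #|[set b in B | (x \in b) && (y \in b)]| = 1
   & forall x y, x != y -> lab x = lab y -> forall b, b \in B -> ~~ ((x \in b) && (y \in b))].

Lemma gdd_plgdd k ty (T : finType) (G B : {set {set T}}) :
  is_GDD k ty G B -> plgdd (fun x => Some (pblock G x)) k B.
Proof.
case=> _ _ [_ Hk] H1 H2; split => //.
- by move=> x y xy _ _ ne; apply: H1 => //; apply: contra ne => /eqP ->.
- by move=> x y xy [] e; apply: H2.
Qed.

Lemma transport (T X : finType) (K1 K2 : eqType) (labT : T -> option K1)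
  (labX : X -> option K2) k B (f : T -> X) :
  plgdd labT k B -> injective f ->
  (forall t, labT t != None -> labX (f t) != None) ->
  (forall t s, labT t != None -> labT s != None ->
      (labX (f t) == labX (f s)) = (labT t == labT s)) ->
  (forall x, labX x != None -> exists2 t, labT t != None & f t = x) ->
  plgdd labX k [set f @: b | b : {set T} in B] /\ #|[set f @: b | b : {set T} in B]| = #|B|.
Proof.
case=> Hk Hd H1 H2 finj h1 h2 h3; split; last by rewrite card_imset //; apply: imset_inj.
split.
- by move=> _ /imsetP[b bB ->]; rewrite card_imset // Hk.
- by move=> _ x /imsetP[b bB ->] /imsetP[t tb ->]; apply: h1; apply: Hd tb.
- move=> x y xy nx ny nxy.
  have [t nt ext] := h3 _ nx; have [s ns eys] := h3 _ ny; subst x y.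
  have ts : t != s by apply: contra xy => /eqP ->.
  have nts : labT t != labT s by rewrite -h2.
  rewrite -(H1 t s ts nt ns nts).
  have -> : [set b in [set f @: b | b : {set T} in B] | (f t \in b) && (f s \in b)] =
     [set f @: b | b : {set T} in [set b in B | (t \in b) && (s \in b)]].
    apply/setP => b'; apply/idP/idP.
    + rewrite !inE => /and3P[/imsetP[b bB ->]]; rewrite !(mem_imset _ _ finj) => tb sb.
      by apply/imsetP; exists b => //; rewrite !inE bB tb sb.
    + case/imsetP => b /[!inE] /and3P[bB tb sb] ->.
      by rewrite !(mem_imset _ _ finj) tb sb (imset_f _ bB).
  by rewrite card_imset //; apply: imset_inj.
- move=> x y xy exy _ /imsetP[b bB ->]; apply/negP => /andP[].
  move=> /imsetP[t tb et] /imsetP[s sb es]; subst x y.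
  have nt := Hd _ _ bB tb; have ns := Hd _ _ bB sb.
  have ts : t != s by apply: contra xy => /eqP ->.
  move: (exy) => /eqP; rewrite h2 // => /eqP e.
  by move: (H2 t s ts e b bB); rewrite tb sb.
Qed.

Lemma embed k ty (T X : finType) (K : eqType) (G B : {set {set T}})
  (labX : X -> option K) (ks : seq (option K)) :
  0 < k -> is_GDD k ty G B -> uniq ks -> None \notin ks ->
  (forall x, labX x != None -> labX x \in ks) ->
  perm_eq [seq n <- [seq #|[set x | labX x == o]| | o <- ks] | 0 < n] (type_sizes ty) ->
  exists2 B' : {set {set X}}, plgdd labX k B' & B' != set0.
Proof.
move=> k0 gdd uks nks covks pks.
have gdd' := gdd; case: gdd' => partG sizesG [BnG Bk] _ _.
have /and3P[/eqP covG trivG _] := partG.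
pose fs o := #|[set x | labX x == o]|.
pose ks' := filter (preim fs (fun n => 0 < n)) ks.
have E : perm_eq [seq #|A : {set T}| | A <- enum G] [seq fs o | o <- ks'].
  rewrite /ks' -filter_map; apply: (perm_trans sizesG); rewrite perm_sym; exact: pks.
have [Is pIs EIs] := perm_iotaP 0 E.
have sizeIs : size Is = size (enum G) by rewrite -(size_map (fun A : {set T} => #|A|)) EIs size_map.
have uIs : uniq Is by rewrite (perm_uniq pIs) iota_uniq.
have Islt : forall i, i < size Is -> nth 0 Is i < size ks'.
  move=> i ilt; have := mem_nth 0 ilt; rewrite (perm_mem pIs) mem_iota add0n size_map.
  by [].
have uks' : uniq ks' by rewrite filter_uniq.
pose A t := pblock G t.
pose i t := index (A t) (enum G).
pose j t := nth 0 Is (i t).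
pose F jj := [set x | labX x == nth None ks' jj].
have AG t : A t \in G by rewrite /A pblock_mem // covG inE.
have AGe t : A t \in enum G by rewrite mem_enum.
have ilt t : i t < size (enum G) by rewrite /i index_mem mem_enum.
have jlt t : j t < size ks' by apply: Islt; rewrite sizeIs.
have cardF jj : jj < size ks' -> #|F jj| = nth 0 (map fs ks') jj.
  by move=> h; rewrite (nth_map None).
have EIsn ii : ii < size (enum G) -> #|nth set0 (enum G) ii| = #|F (nth 0 Is ii)|.
  move=> h; have := congr1 (fun s => nth 0 s ii) EIs => /=.
  rewrite (nth_map set0) // (nth_map 0) ?sizeIs // => ->.
  by rewrite cardF // Islt // sizeIs.
have cardA t : #|A t| = #|F (j t)|.
  by rewrite -EIsn // /i nth_index // mem_enum.
have jeq t s : (j t == j s) = (A t == A s).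
  rewrite /j nth_uniq ?sizeIs //; apply/eqP/eqP => [e|e]; last by rewrite /i e.
  by rewrite -(nth_index set0 (AGe t)) -/(i t) e /i nth_index // mem_enum.
have [b bB] : exists b, b \in B by apply/set0Pn.
have [t0 t0b] : exists t0, t0 \in b by apply/card_gt0P; rewrite Bk.
have [x0 _] : exists x0, x0 \in F (j t0).
  by apply/card_gt0P; rewrite -cardA; apply/card_gt0P; exists t0; rewrite /A mem_pblock covG inE.
pose f t := nth x0 (enum (F (j t))) (index t (enum (A t))).
have fF t : f t \in F (j t).
  rewrite /f -mem_enum; apply: mem_nth; rewrite -cardE -cardA cardE index_mem mem_enum.
  by rewrite /A mem_pblock covG inE.
have labf t : labX (f t) = nth None ks' (j t) by have := fF t; rewrite inE => /eqP.
have labjeq t s : (labX (f t) == labX (f s)) = (j t == j s) by rewrite !labf nth_uniq.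
have nN t : labX (f t) != None.
  rewrite labf; apply: contraNneq nks => <-.
  by have := mem_nth None (jlt t); rewrite mem_filter => /andP[].
have finj : injective f.
  move=> t s e; have := labjeq t s; rewrite e eqxx jeq => /esym/eqP eA.
  have ej : j t = j s by apply/eqP; rewrite jeq eA.
  have tA : t \in enum (A s) by rewrite mem_enum -eA /A mem_pblock covG inE.
  have sA : s \in enum (A s) by rewrite mem_enum /A mem_pblock covG inE.
  move: e; rewrite /f ej eA => /eqP; rewrite nth_uniq ?enum_uniq //; last 2 first.
  - by rewrite -cardE -cardA cardE index_mem.
  - by rewrite -cardE -cardA cardE index_mem.
  move=> /eqP e.
  by rewrite -(nth_index t tA) e nth_index.
have [] := @transport T X _ K (fun t => Some (A t)) labX k B f (gdd_plgdd gdd) finj.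
- by move=> t _; apply: nN.
- by move=> t s _ _; rewrite labjeq jeq.
- move=> x nx.
  have oks' : labX x \in ks'.
    rewrite mem_filter covks // andbT /preim /fs; by apply/card_gt0P; exists x; rewrite inE.
  pose jj := index (labX x) ks'.
  have jjlt : jj < size ks' by rewrite /jj index_mem.
  have jjIs : jj \in Is by rewrite (perm_mem pIs) mem_iota add0n size_map.
  pose ii := index jj Is.
  have iilt : ii < size (enum G) by rewrite -sizeIs /ii index_mem.
  pose As := nth set0 (enum G) ii.
  have AsG : As \in G by rewrite -mem_enum mem_nth.
  have Fjj : F jj = [set y | labX y == labX x] by rewrite /F /jj nth_index.
  have cAs : #|As| = #|F jj| by rewrite /As EIsn // /ii nth_index.
  have xF : x \in enum (F jj) by rewrite mem_enum Fjj inE.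
  pose m := index x (enum (F jj)).
  have mlt : m < #|As| by rewrite cAs cardE /m index_mem.
  have [t1 _] : exists t1, t1 \in As by apply/card_gt0P; apply: leq_ltn_trans mlt.
  pose t := nth t1 (enum As) m.
  have tAs : t \in As by rewrite -mem_enum mem_nth // -cardE.
  have At : A t = As by rewrite /A (def_pblock trivG AsG tAs).
  have jt : j t = jj by rewrite /j /i At /As index_uniq ?enum_uniq // nth_index.
  exists t => //; rewrite /f jt At /t index_uniq ?enum_uniq -?cardE //.
  by rewrite nth_index.
- move=> pl cB; exists [set f @: b | b : {set T} in B] => //.
  by rewrite -card_gt0 cB card_gt0.
Qed.

Lemma finalize k ty (X : finType) (K : eqType) (lab : X -> K) (B : {set {set X}})
  (ks : seq K) :
  plgdd (fun x => Some (lab x)) k B -> B != set0 -> uniq ks ->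
  (forall x, lab x \in ks) ->
  perm_eq [seq n <- [seq #|[set x | lab x == o]| | o <- ks] | 0 < n] (type_sizes ty) ->
  #|X| = type_points ty -> GDD_exists k ty.
Proof.
move=> pl Bn uks cks pks E.
pose n := type_points ty.
pose g (x : X) : 'I_n := cast_ord E (enum_rank x).
pose h (i : 'I_n) : X := enum_val (cast_ord (esym E) i).
have hK : cancel g h by move=> x; rewrite /g /h cast_ordK enum_rankK.
have gK : cancel h g by move=> i; rewrite /g /h enum_valK cast_ordKV.
pose labN i := lab (h i).
have [] := @transport X (ordinal n) K K (fun x => Some (lab x))
   (fun i => Some (labN i)) k B g pl (can_inj hK).
- by [].
- by move=> t s _ _; rewrite /labN !hK.
- by move=> i _; exists (h i); rewrite ?gK.
set B' := [set _ | _ in B] => pl' cB'.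
pose G := preim_partition labN [set: 'I_n].
have partG : partition G [set: 'I_n] by apply: preim_partitionP.
have /and3P[/eqP covG trivG _] := partG.
have pbE x y : (pblock G x == pblock G y) = (labN x == labN y).
  rewrite eq_pblock // ?covG ?inE //.
  rewrite (@pblock_equivalence_partition _ (fun x y => labN x == labN y)) ?inE //.
  by split=> //= /eqP ->.
case: pl' => Bk Bd H1 H2.
exists G, B'; split => //.
- pose FN o := [set i | labN i == o].
  pose fsN o := #|FN o|.
  have fsE o : #|[set x | lab x == o]| = fsN o.
    rewrite /fsN -(card_imset _ (can_inj gK)); apply: eq_card => x.
    rewrite !inE; apply/idP/imsetP => [e|[i iF ->]]; first by exists (g x); rewrite ?inE /labN hK.
    by move: iF; rewrite !inE.
  rewrite (eq_map fsE) in pks.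
  apply: (perm_trans _ pks); rewrite filter_map.
  set ks' := filter _ ks.
  suff pe : perm_eq (enum G) (map FN ks').
    by have := perm_map (fun A : {set 'I_n} => #|A|) pe; rewrite -map_comp.
  apply: uniq_perm; first exact: enum_uniq.
    rewrite map_inj_in_uniq ?filter_uniq // => o1 o2.
    rewrite !mem_filter /preim /fsN => /andP[/card_gt0P[i iF] _] _ e.
    have := iF; rewrite e !inE => /eqP <-. by move: iF; rewrite inE => /eqP.
  move=> A; rewrite mem_enum; apply/imsetP/mapP => [[x _ ->]|[o]].
    exists (labN x); first by rewrite mem_filter cks andbT; apply/card_gt0P; exists x; rewrite inE.
    by apply/setP => y; rewrite !inE eq_sym.
  rewrite mem_filter => /andP[/card_gt0P[i]]; rewrite inE => /eqP <- _ ->.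
  by exists i; rewrite ?inE //; apply/setP => y; rewrite !inE eq_sym.
- split => //; by rewrite -card_gt0 cB' card_gt0.
- move=> x y xy; rewrite pbE => ne; apply: H1 => //.
- move=> x y xy /eqP; rewrite pbE => /eqP e; apply: H2 => //; by rewrite e.
Qed.

Section Construction.
Variables (T0 : finType) (w : T0 -> nat) (t c d : nat).

Definition Sig := {p : T0 & 'I_(w p)}.
Definition Pt := ((Sig + ('I_t * 'I_c)) + 'I_d)%type.

Definition labG (g : {set T0}) (x : Pt) : option (T0 + unit) :=
  match x with
  | inl (inl s) => if tag s \in g then Some (inl (tag s)) else None
  | inl (inr _) => None
  | inr _ => Some (inr tt)
  end.

Definition labB (P : {set {set {set T0}}}) (Q : seq {set {set T0}}) (be : {set T0})
   (x : Pt) : option (T0 + unit) :=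
  match x with
  | inl (inl s) => if tag s \in be then Some (inl (tag s)) else None
  | inl (inr kj) => if val kj.1 == index (pblock P be) Q then Some (inr tt) else None
  | inr _ => None
  end.

Definition labF (P0 : {set {set T0}}) (x : Pt) : option {set T0} :=
  match x with
  | inl (inl s) => Some (pblock P0 (tag s))
  | _ => None
  end.

Definition sees (K : eqType) (lab : Pt -> option K) x y :=
  [&& lab x != None, lab y != None & lab x != lab y].

Lemma Tagged_inj p : injective (fun i : 'I_(w p) => Tagged (fun p => 'I_(w p)) i).
Proof. by move=> i j /eqP; rewrite eq_Tagged /= => /eqP. Qed.

Lemma card_tag_fiber p : #|[set s : Sig | tag s == p]| = w p.
Proof.
rewrite -[w p]card_ord -(card_imset _ (@Tagged_inj p)); apply: eq_card => s.
rewrite inE; apply/idP/imsetP => [|[i _ ->] //].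
by case: s => q i /= /eqP e; subst q; exists i.
Qed.

Lemma card_tag_set (S : {set T0}) : #|[set s : Sig | tag s \in S]| = \sum_(p in S) w p.
Proof.
rewrite -sum1_card (partition_big (fun s : Sig => tag s) (fun p => p \in S)) /=; last first.
  by move=> s; rewrite inE.
apply: eq_bigr => p pS; rewrite sum1_card -card_tag_fiber; apply: eq_card => s.
rewrite unfold_in /= !inE; case: eqP => [->|]; by rewrite ?pS ?andbF.
Qed.


Lemma seesGE g x y : sees (labG g) x y ->
 [\/ exists s s', [/\ x = inl (inl s), y = inl (inl s'), tag s \in g, tag s' \in g & tag s != tag s'],
     exists s e, [/\ x = inl (inl s), y = inr e & tag s \in g] |
     exists s e, [/\ x = inr e, y = inl (inl s) & tag s \in g]].
Proof.
rewrite /sees; case: x => [[s|[k j]]|e]; case: y => [[s'|[k' j']]|e'] //=;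
  do ?case: ifP => //=.
- move=> h1 h2 ne; apply: Or31; exists s, s'; split => //; try by apply: contra ne => /eqP ->.
- by move=> h _; apply: Or32; exists s, e'.
- by move=> h _; apply: Or33; exists s', e.
Qed.

Lemma seesBE P Q be x y : sees (labB P Q be) x y ->
 [\/ exists s s', [/\ x = inl (inl s), y = inl (inl s'), tag s \in be, tag s' \in be & tag s != tag s'],
     exists s k j, [/\ x = inl (inl s), y = inl (inr (k, j)), tag s \in be & val k = index (pblock P be) Q] |
     exists s k j, [/\ x = inl (inr (k, j)), y = inl (inl s), tag s \in be & val k = index (pblock P be) Q]].
Proof.
rewrite /sees; case: x => [[s|[k j]]|e]; case: y => [[s'|[k' j']]|e'] //=;
  do ?case: ifP => //=.
- move=> h1 h2 ne; apply: Or31; exists s, s'; split => //; try by apply: contra ne => /eqP ->.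
- by move=> /eqP h1 h2 _; apply: Or32; exists s, k', j'.
- by move=> h1 /eqP h2 _; apply: Or33; exists s', k, j.
Qed.


Lemma sees_sym (K : eqType) (lab : Pt -> option K) x y : sees lab x y = sees lab y x.
Proof. by rewrite /sees [lab y == lab x]eq_sym; case: (lab x != None); case: (lab y != None). Qed.

Lemma seesG_fst g s y : sees (labG g) (inl (inl s)) y -> tag s \in g.
Proof. by rewrite /sees /=; case: ifP. Qed.

Lemma seesB_fst P Q be s y : sees (labB P Q be) (inl (inl s)) y -> tag s \in be.
Proof. by rewrite /sees /=; case: ifP. Qed.

Lemma seesB_fstc P Q be k j y : sees (labB P Q be) (inl (inr (k, j))) y ->
  val k = index (pblock P be) Q.
Proof. by rewrite /sees /=; case: ifP => // /eqP. Qed.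

Lemma seesG_d g e y : ~~ sees (labG g) (inl (inr e)) y.
Proof. by []. Qed.

Lemma seesB_d P Q be e y : ~~ sees (labB P Q be) (inr e) y.
Proof. by []. Qed.

Lemma sees_plgdd (K : eqType) (lab : Pt -> option K) k B x y b :
  plgdd lab k B -> x != y -> b \in B -> x \in b -> y \in b -> sees lab x y.
Proof.
case=> _ Hd _ H4 xy bB xb yb; rewrite /sees (Hd _ _ bB xb) (Hd _ _ bB yb) /=.
by apply/eqP => e; move: (H4 x y xy e b bB); rewrite xb yb.
Qed.


Lemma assemble k (G0 B0 : {set {set T0}}) (P : {set {set {set T0}}}) (P0 : {set {set T0}})
  (FG FB : {set T0} -> {set {set Pt}}) :
  partition G0 [set: T0] ->
  (forall x y, x != y -> pblock G0 x != pblock G0 y ->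
      #|[set b in B0 | (x \in b) && (y \in b)]| = 1) ->
  (forall x y, x != y -> pblock G0 x = pblock G0 y ->
      forall b, b \in B0 -> ~~ ((x \in b) && (y \in b))) ->
  partition P B0 -> (forall C, C \in P -> partition C [set: T0]) ->
  P0 \in P -> t <= size (enum (P :\ P0)) ->
  (forall g, g \in G0 -> plgdd (labG g) k (FG g)) ->
  (forall be, be \in B0 :\: P0 -> plgdd (labB P (enum (P :\ P0)) be) k (FB be)) ->
  plgdd (fun x => Some (labF P0 x)) k
     ((\bigcup_(g in G0) FG g) :|: \bigcup_(be in B0 :\: P0) FB be).
Proof.
move=> partG H1 H2 partP partC P0P tQ FGp FBp.
have /and3P[/eqP covG trivG _] := partG.
have /and3P[/eqP covP trivP _] := partP.
set Q := enum (P :\ P0).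
have pbG g p : g \in G0 -> p \in g -> pblock G0 p = g.
  by move=> gG pg; apply: def_pblock.
have pGmem p : pblock G0 p \in G0 by rewrite pblock_mem // covG inE.
have inpG p : p \in pblock G0 p by rewrite mem_pblock covG inE.
have buniq p q b1 b2 : p != q -> b1 \in B0 -> b2 \in B0 -> p \in b1 -> q \in b1 ->
    p \in b2 -> q \in b2 -> b1 = b2.
  move=> pq b1B b2B pb1 qb1 pb2 qb2.
  have [e|ne] := eqVneq (pblock G0 p) (pblock G0 q).
    by move: (H2 p q pq e b1 b1B); rewrite pb1 qb1.
  have /cards1P[b0 e0] : #|[set b in B0 | (p \in b) && (q \in b)]| == 1 by rewrite H1.
  have : b1 \in [set b in B0 | (p \in b) && (q \in b)] by rewrite inE b1B pb1 qb1.
  have : b2 \in [set b in B0 | (p \in b) && (q \in b)] by rewrite inE b2B pb2 qb2.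
  by rewrite e0 !inE => /eqP -> /eqP ->.
have CB C b : C \in P -> b \in C -> b \in B0.
  by move=> CP bC; rewrite -covP; apply/bigcupP; exists C.
have /and3P[/eqP covP0 trivP0 _] := partC _ P0P.
have inpP0 p : p \in pblock P0 p by rewrite mem_pblock covP0 inE.
have pP0mem p : pblock P0 p \in P0 by rewrite pblock_mem // covP0 inE.
have U1 g1 g2 x y : g1 \in G0 -> g2 \in G0 -> sees (labG g1) x y -> sees (labG g2) x y -> g1 = g2.
  move=> g1G g2G /seesGE[[s [s' [ex ey h1 _ _]]]|[s [e [ex ey h1]]]|[s [e [ex ey h1]]]];
    subst x y => h2.
  - by rewrite -(pbG _ _ g1G h1) -(pbG _ _ g2G (seesG_fst h2)).
  - by rewrite -(pbG _ _ g1G h1) -(pbG _ _ g2G (seesG_fst h2)).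
  - by rewrite sees_sym in h2; rewrite -(pbG _ _ g1G h1) -(pbG _ _ g2G (seesG_fst h2)).
have idxE be1 be2 (k0 : 'I_t) : be1 \in B0 -> be2 \in B0 ->
    val k0 = index (pblock P be1) Q -> val k0 = index (pblock P be2) Q ->
    pblock P be1 = pblock P be2.
  move=> b1B b2B e1 e2.
  have l1 : index (pblock P be1) Q < size Q by rewrite -e1; exact: leq_trans (ltn_ord k0) tQ.
  have l2 : index (pblock P be2) Q < size Q by rewrite -e2; exact: leq_trans (ltn_ord k0) tQ.
  rewrite index_mem in l1; rewrite index_mem in l2.
  by rewrite -(nth_index set0 l1) -(nth_index set0 l2) -e1 -e2.
have inpP be : be \in B0 -> be \in pblock P be by move=> bB; rewrite mem_pblock covP.
have pPmem be : be \in B0 -> pblock P be \in P by move=> bB; rewrite pblock_mem // covP.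
have U2c be1 be2 p (k0 : 'I_t) : be1 \in B0 -> be2 \in B0 ->
    val k0 = index (pblock P be1) Q -> val k0 = index (pblock P be2) Q ->
    p \in be1 -> p \in be2 -> be1 = be2.
  move=> b1B b2B e1 e2 p1 p2.
  have eC := idxE _ _ _ b1B b2B e1 e2.
  have CP := pPmem _ b1B.
  have /and3P[_ trivC _] := partC _ CP.
  have b1C := inpP _ b1B; have b2C := inpP _ b2B; rewrite -eC in b2C.
  by rewrite -(def_pblock trivC b1C p1) -(def_pblock trivC b2C p2).
have U2 be1 be2 x y : be1 \in B0 -> be2 \in B0 -> sees (labB P Q be1) x y ->
    sees (labB P Q be2) x y -> be1 = be2.
  move=> b1B b2B /seesBE[[s [s' [ex ey h1 h1' ne]]]|[s [k0 [j [ex ey h1 e1]]]]|[s [k0 [j [ex ey h1 e1]]]]];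
    subst x y => h2.
  - apply: (buniq (tag s) (tag s')) => //; first exact: seesB_fst h2.
    by rewrite sees_sym in h2; exact: seesB_fst h2.
  - apply: (U2c _ _ (tag s) k0) => //; first by rewrite sees_sym in h2; exact: seesB_fstc h2.
    exact: seesB_fst h2.
  - apply: (U2c _ _ (tag s) k0) => //; first exact: seesB_fstc h2.
    by rewrite sees_sym in h2; exact: seesB_fst h2.
have U3 g be x y : g \in G0 -> be \in B0 -> sees (labG g) x y -> sees (labB P Q be) x y -> False.
  move=> gG bB /seesGE[[s [s' [ex ey h1 h1' ne]]]|[s [e [ex ey h1]]]|[s [e [ex ey h1]]]];
    subst x y => h2.
  - have e : pblock G0 (tag s) = pblock G0 (tag s') by rewrite (pbG _ _ gG h1) (pbG _ _ gG h1').
    move: (H2 _ _ ne e be bB); rewrite (seesB_fst h2).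
    by rewrite sees_sym in h2; rewrite (seesB_fst h2).
  - by rewrite sees_sym in h2; move: h2; apply/negP; apply: seesB_d.
  - by move: h2; apply/negP; apply: seesB_d.
have inBD be : (be \in B0 :\: P0) = (be \notin P0) && (be \in B0) by rewrite inE.
have E1 s y : labF P0 (inl (inl s)) != labF P0 y ->
   (exists2 g, g \in G0 & sees (labG g) (inl (inl s)) y) \/
   (exists2 be, be \in B0 :\: P0 & sees (labB P Q be) (inl (inl s)) y).
  case: y => [[s'|[k0 j]]|e] /= ne.
  - have pq : tag s != tag s' by apply: contra ne => /eqP ->.
    case: (eqVneq (pblock G0 (tag s)) (pblock G0 (tag s'))) => [e|ne'].
    + left; exists (pblock G0 (tag s)) => //.
      have qg : tag s' \in pblock G0 (tag s) by rewrite e inpG.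
      rewrite /sees /= inpG qg /=; by apply: contra pq => /eqP [->].
    + have /cards1P[b0 e0] : #|[set b in B0 | (tag s \in b) && (tag s' \in b)]| == 1.
        by rewrite H1.
      have : b0 \in [set b in B0 | (tag s \in b) && (tag s' \in b)] by rewrite e0 set11.
      rewrite inE => /andP[b0B /andP[pb0 qb0]].
      right; exists b0.
        rewrite inBD b0B andbT; apply: contra ne => b0P0.
        by rewrite (def_pblock trivP0 b0P0 pb0) (def_pblock trivP0 b0P0 qb0).
      rewrite /sees /= pb0 qb0 /=; by apply: contra pq => /eqP [->].
  - have kQ : k0 < size Q := leq_trans (ltn_ord k0) tQ.
    have : nth set0 Q k0 \in P :\ P0 by rewrite -mem_enum mem_nth.
    rewrite in_setD1 => /andP[CneP0 CP].
    have /and3P[/eqP covC trivC _] := partC _ CP.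
    have beC : pblock (nth set0 Q k0) (tag s) \in nth set0 Q k0 by rewrite pblock_mem // covC inE.
    have beB := CB _ _ CP beC.
    have pPbe := def_pblock trivP CP beC.
    have beP0 : pblock (nth set0 Q k0) (tag s) \notin P0.
      by apply/negP => bP0; move: CneP0; rewrite -pPbe (def_pblock trivP P0P bP0) eqxx.
    right; exists (pblock (nth set0 Q k0) (tag s)); first by rewrite inBD beP0 beB.
    by rewrite /sees /= mem_pblock covC inE pPbe /Q index_uniq ?enum_uniq // eqxx.
  - by left; exists (pblock G0 (tag s)) => //; rewrite /sees /= inpG.
have E x y : labF P0 x != labF P0 y ->
   (exists2 g, g \in G0 & sees (labG g) x y) \/
   (exists2 be, be \in B0 :\: P0 & sees (labB P Q be) x y).
  case: x => [[s|kj]|e] ne; first exact: E1.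
  - case: y ne => [[s'|kj']|e'] //= _.
    by case: (E1 s' (inl (inr kj)) isT) => [[g gG h]|[be bB h]]; [left; exists g|right; exists be];
      rewrite // sees_sym.
  - case: y ne => [[s'|kj']|e'] //= _.
    by case: (E1 s' (inr e) isT) => [[g gG h]|[be bB h]]; [left; exists g|right; exists be];
      rewrite // sees_sym.
have N x y : x != y -> labF P0 x = labF P0 y ->
   (forall g, g \in G0 -> ~~ sees (labG g) x y) /\
   (forall be, be \in B0 :\: P0 -> ~~ sees (labB P Q be) x y).
  move=> xy exy; split => [g gG|be beD]; apply/negP.
  - move=> /seesGE[[s [s' [ex ey h1 h1' ne]]]|[s [e [ex ey h1]]]|[s [e [ex ey h1]]]];
      subst x y; move: exy => //= [e].
    have bB := CB _ _ P0P (pP0mem (tag s)).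
    have e' : pblock G0 (tag s) = pblock G0 (tag s') by rewrite (pbG _ _ gG h1) (pbG _ _ gG h1').
    by move: (H2 _ _ ne e' _ bB); rewrite inpP0 e inpP0.
  - move: beD; rewrite inBD => /andP[beP0 beB].
    move=> /seesBE[[s [s' [ex ey h1 h1' ne]]]|[s [k0 [j [ex ey h1 _]]]]|[s [k0 [j [ex ey h1 _]]]]];
      subst x y; move: exy => //= [e].
    have bB := CB _ _ P0P (pP0mem (tag s)).
    have q1 : tag s' \in pblock P0 (tag s) by rewrite e inpP0.
    have := buniq _ _ _ _ ne beB bB h1 h1' (inpP0 _) q1.
    by move=> ebe; move: beP0; rewrite ebe pP0mem.
split.
- move=> b; rewrite inE => /orP[/bigcupP[g gG bF]|/bigcupP[be bB bF]].
    by case: (FGp g gG) => Hk _ _ _; exact: Hk.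
  by case: (FBp be bB) => Hk _ _ _; exact: Hk.
- by [].
- move=> x y xy _ _ nxy.
  have ne : labF P0 x != labF P0 y by apply: contra nxy => /eqP ->.
  case: (E x y ne) => [[g0 g0G h0]|[be0 be0B h0]].
  + rewrite (_ : [set b in _ | _] = [set b in FG g0 | (x \in b) && (y \in b)]).
      case: (FGp _ g0G) => _ _ H3 _; move/and3P: h0 => [n1 n2 n3]; exact: H3.
    apply/setP => b; rewrite !inE; apply/andP/andP => [[]|[bF xyb]]; last first.
      by split=> //; apply/orP; left; apply/bigcupP; exists g0.
    case/orP => [/bigcupP[g gG bF]|/bigcupP[be beB bF]] /andP[xb yb].
      have h := sees_plgdd (FGp _ gG) xy bF xb yb.
      by rewrite (U1 g0 g x y g0G gG h0 h) xb yb.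
    have h := sees_plgdd (FBp _ beB) xy bF xb yb.
    by exfalso; move: beB; rewrite inBD => /andP[_ beB]; apply: (U3 g0 be x y g0G beB h0 h).
  + rewrite (_ : [set b in _ | _] = [set b in FB be0 | (x \in b) && (y \in b)]).
      case: (FBp _ be0B) => _ _ H3 _; move/and3P: h0 => [n1 n2 n3]; exact: H3.
    apply/setP => b; rewrite !inE; apply/andP/andP => [[]|[bF xyb]]; last first.
      by split=> //; apply/orP; right; apply/bigcupP; exists be0.
    case/orP => [/bigcupP[g gG bF]|/bigcupP[be beB bF]] /andP[xb yb].
      have h := sees_plgdd (FGp _ gG) xy bF xb yb.
      by exfalso; move: be0B; rewrite inBD => /andP[_ be0B]; apply: (U3 g be0 x y gG be0B h h0).
    have h := sees_plgdd (FBp _ beB) xy bF xb yb.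
    move: (beB) (be0B); rewrite !inBD => /andP[_ beB'] /andP[_ be0B'].
    by rewrite (U2 be0 be x y be0B' beB' h0 h) xb yb.
- move=> x y xy [exy] b; rewrite inE => /orP[/bigcupP[g gG bF]|/bigcupP[be beB bF]];
    apply/negP => /andP[xb yb].
  + have h := sees_plgdd (FGp _ gG) xy bF xb yb; have [N1 _] := N x y xy exy.
    by move: (N1 g gG); rewrite h.
  + have h := sees_plgdd (FBp _ beB) xy bF xb yb; have [_ N2] := N x y xy exy.
    by move: (N2 be beB); rewrite h.
Qed.


Lemma inl_inl_inj : injective (fun s : Sig => (inl (inl s) : Pt)).
Proof. by move=> s s' [->]. Qed.

Lemma fiberG (g : {set T0}) p : p \in g -> #|[set x | labG g x == Some (inl p)]| = w p.
Proof.
move=> pg; rewrite -card_tag_fiber -(card_imset _ inl_inl_inj); apply: eq_card => x.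
rewrite !inE; case: x => [[s|kj]|e] /=.
- rewrite mem_imset ?inE; last exact: inl_inl_inj.
  case: ifP => [sg|sg]; first by apply/eqP/eqP => [[->]|->].
  by apply/esym/negbTE; apply: contraFN sg => /eqP ->.
- by apply/esym/imsetP => [[s _]].
- by apply/esym/imsetP => [[s _]].
Qed.

Definition inrP (e : 'I_d) : Pt := inr e.
Lemma inrP_inj : injective inrP. Proof. by move=> e e' [->]. Qed.

Lemma fiberGd g : #|[set x | labG g x == Some (inr tt)]| = d.
Proof.
rewrite (_ : [set x | _] = inrP @: setT).
  by rewrite card_imset ?cardsT ?card_ord //; exact: inrP_inj.
apply/setP => x; rewrite !inE; case: x => [[s|kj]|e] /=.
- by case: ifP => _; apply/esym/imsetP => [[e _]].
- by apply/esym/imsetP => [[e _]].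
- by apply/esym/imsetP; exists e.
Qed.

Lemma fiberB P Q (be : {set T0}) p : p \in be -> #|[set x | labB P Q be x == Some (inl p)]| = w p.
Proof.
move=> pg; rewrite -card_tag_fiber -(card_imset _ inl_inl_inj); apply: eq_card => x.
rewrite !inE; case: x => [[s|[k j]]|e] /=.
- rewrite mem_imset ?inE; last exact: inl_inl_inj.
  case: ifP => [sg|sg]; first by apply/eqP/eqP => [[->]|->].
  by apply/esym/negbTE; apply: contraFN sg => /eqP ->.
- by case: ifP => _; apply/esym/imsetP => [[s _]].
- by apply/esym/imsetP => [[s _]].
Qed.

Lemma fiberBc P Q be :
  #|[set x | labB P Q be x == Some (inr tt)]| = (index (pblock P be) Q < t) * c.
Proof.
case: ltnP => [lt|ge]; last first.
  rewrite mul0n; apply: eq_card0 => x; rewrite !inE; case: x => [[s|[k j]]|e] //=.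
  - by case: ifP.
  - case: ifP => // /eqP e; move: (ltn_ord k); rewrite e => h.
    by move: (leq_trans h ge); rewrite ltnn.
rewrite mul1n.
pose cP (j : 'I_c) : Pt := inl (inr (Ordinal lt, j)).
have cP_inj : injective cP by move=> j1 j2 [->].
rewrite (_ : [set x | _] = cP @: setT).
  by rewrite card_imset ?cardsT ?card_ord.
apply/setP => x; rewrite !inE; case: x => [[s|[k j]]|e] /=.
- by case: ifP => _; apply/esym/imsetP => [[e _]].
- case: ifP => [/eqP ek|nek].
    apply/esym/imsetP; exists j => //; rewrite /cP; congr (inl (inr (_, _))); exact: val_inj.
  apply/esym/imsetP => [[j' _ ek]]; case: ek => ek _; move: nek; rewrite ek /= eqxx.
  by [].
- by apply/esym/imsetP => [[e' _]].
Qed.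

Lemma fiberF P0 (be : {set T0}) :
  #|[set x | labF P0 x == Some be]| = \sum_(p in [set p | pblock P0 p == be]) w p.
Proof.
rewrite -card_tag_set -(card_imset _ inl_inl_inj); apply: eq_card => x.
rewrite !inE; case: x => [[s|kj]|e] /=.
- by rewrite mem_imset ?inE //; exact: inl_inl_inj.
- by apply/esym/imsetP => [[s _]].
- by apply/esym/imsetP => [[s _]].
Qed.

Definition injCD (z : ('I_t * 'I_c) + 'I_d) : Pt :=
  match z with inl kj => inl (inr kj) | inr e => inr e end.

Lemma injCD_inj : injective injCD.
Proof. by case=> [kj|e] [kj'|e'] //= [->]. Qed.

Lemma fiberFN P0 : #|[set x | labF P0 x == None]| = t * c + d.
Proof.
rewrite (_ : [set x | _] = injCD @: setT).
  by rewrite card_imset ?cardsT ?card_sum ?card_prod ?card_ord //; exact: injCD_inj.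
apply/setP => x; rewrite !inE; case: x => [[s|kj]|e] /=.
- by apply/esym/imsetP => [[[kj|e] _]].
- by apply/esym/imsetP; exists (inl kj).
- by apply/esym/imsetP; exists (inr e).
Qed.

Lemma card_Pt : #|{: Pt}| = \sum_(p : T0) w p + t * c + d.
Proof.
rewrite /Pt !card_sum card_prod !card_ord.
congr (_ + _ + _); rewrite (_ : \sum_p w p = \sum_(p in [set: T0]) w p); last by apply: eq_bigl => p; rewrite inE.
rewrite -card_tag_set; by apply: eq_card => s; rewrite !inE.
Qed.

End Construction.

Lemma map_const_in (T U : eqType) (f : T -> U) (y : U) (s : seq T) :
  (forall x, x \in s -> f x = y) -> map f s = nseq (size s) y.
Proof.
elim: s => //= x s IH H; rewrite H ?mem_head // IH // => z zs.
by apply: H; rewrite inE zs orbT.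
Qed.

Lemma sizes_one u m : 0 < u -> type_sizes [:: (u, m)] = nseq m u.
Proof. by move=> u0; rewrite /type_sizes /= cats0 filter_nseq u0 mul1n. Qed.

Lemma gdd_groups (T : finType) k u m (G B : {set {set T}}) :
  0 < u -> is_GDD k [:: (u, m)] G B -> (forall g, g \in G -> #|g| = u) /\ #|G| = m.
Proof.
move=> u0 [_ sz _ _ _]; rewrite sizes_one // in sz; split.
  move=> g gG; have : #|g| \in [seq #|X : {set T}| | X <- enum G] by apply: map_f; rewrite mem_enum.
  by rewrite (perm_mem sz) => /nseqP[].
by rewrite cardE -(size_map (fun X : {set T} => #|X|)) (perm_size sz) size_nseq.
Qed.

Lemma block_meets (T : finType) k ty (G B : {set {set T}}) be g :
  is_GDD k ty G B -> #|G| = k -> be \in B -> g \in G -> exists2 p, p \in be & p \in g.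
Proof.
case=> partG _ [_ Bk] _ H2 GN beB gG.
have /and3P[/eqP covG trivG _] := partG.
have inj : {in be &, injective (pblock G)}.
  move=> p q pb qb e; apply/eqP; apply/negP => /negP pq.
  by move: (H2 p q pq e be beB); rewrite pb qb.
have sub : pblock G @: be \subset G.
  by apply/subsetP => _ /imsetP[p _ ->]; rewrite pblock_mem // covG inE.
have : pblock G @: be == G. rewrite eqEcard sub card_in_imset // Bk //=. have := eq_leq GN. done.
move=> /eqP eG; move: gG; rewrite -eG => /imsetP[p pb ->]; exists p => //.
by rewrite mem_pblock covG inE.
Qed.

Lemma block_meets_uniq (T : finType) k ty (G B : {set {set T}}) be g p q :
  is_GDD k ty G B -> be \in B -> g \in G -> p \in be -> p \in g -> q \in be -> q \in g -> p = q.
Proof.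
case=> partG _ _ _ H2 beB gG pb pg qb qg.
have /and3P[_ trivG _] := partG.
apply/eqP; apply/negP => /negP pq.
have e : pblock G p = pblock G q by rewrite (def_pblock trivG gG pg) (def_pblock trivG gG qg).
by move: (H2 p q pq e be beB); rewrite pb qb.
Qed.

Lemma count_classes (T : finType) k ty (G B : {set {set T}}) (P : {set {set {set T}}}) g' x0 :
  is_GDD k ty G B -> #|G| = k -> partition P B -> (forall C, C \in P -> partition C [set: T]) ->
  g' \in G -> x0 \notin g' -> #|P| = #|g'|.
Proof.
move=> gdd GN partP partC g'G x0g'.
have gdd' := gdd; case: gdd' => partG _ [_ Bk] H1 H2.
have /and3P[/eqP covG trivG _] := partG.
have /and3P[/eqP covP trivP _] := partP.
pose Bx0 := [set be in B | x0 \in be].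
pose S y := [set be in B | (x0 \in be) && (y \in be)].
pose F y := odflt set0 [pick be in S y].
have FS y : y \in g' -> S y = [set F y].
  move=> yg.
  have xy : x0 != y by apply: contraNneq x0g' => ->.
  have pb : pblock G x0 != pblock G y.
    rewrite (def_pblock trivG g'G yg); apply: contraNneq x0g' => <-.
    by rewrite mem_pblock covG inE.
  have /cards1P[b0 e] : #|S y| == 1 by rewrite H1.
  rewrite e /F; case: pickP => [be|h]; first by rewrite e inE => /eqP ->.
  by move: (h b0); rewrite e inE eqxx.
have FB y : y \in g' -> F y \in Bx0.
  move=> yg; have : F y \in S y by rewrite FS // set11.
  by rewrite !inE => /andP[-> /andP[-> _]].
have FBy y : y \in g' -> y \in F y.
  move=> yg; have : F y \in S y by rewrite FS // set11.
  by rewrite !inE => /andP[_ /andP[_ ->]].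
have eB : Bx0 = F @: g'.
  apply/setP => be; apply/idP/imsetP => [|[y yg ->]]; last exact: FB.
  rewrite inE => /andP[beB xb].
  have [y yb yg] := block_meets gdd GN beB g'G.
  by exists y => //; apply/set1P; rewrite -FS // /S inE beB xb yb.
have c1 : #|Bx0| = #|g'|.
  rewrite eB card_in_imset // => y1 y2 y1g y2g e.
  apply: (@block_meets_uniq _ _ _ G B (F y1) g' y1 y2 gdd) => //.
  - by have := FB _ y1g; rewrite inE => /andP[].
  - exact: FBy.
  - by rewrite e; exact: FBy.
rewrite -c1.
have eP : Bx0 = (fun C => pblock C x0) @: P.
  apply/setP => be; apply/idP/imsetP => [|[C CP ->]].
    rewrite inE => /andP[beB xb].
    have beP : be \in cover P by rewrite covP.
    have CP := pblock_mem beP.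
    have /and3P[_ trivC _] := partC _ CP.
    exists (pblock P be) => //.
    by rewrite (def_pblock trivC _ xb) // mem_pblock.
  have /and3P[/eqP covC _ _] := partC _ CP.
  rewrite inE mem_pblock covC inE andbT -covP; apply/bigcupP; exists C => //.
  by rewrite pblock_mem // covC inE.
rewrite eP card_in_imset // => C1 C2 C1P C2P e.
have /and3P[/eqP covC1 _ _] := partC _ C1P.
have /and3P[/eqP covC2 _ _] := partC _ C2P.
have b1 : pblock C1 x0 \in C1 by rewrite pblock_mem // covC1 inE.
have b2 : pblock C1 x0 \in C2 by rewrite e pblock_mem // covC2 inE.
by rewrite -(def_pblock trivP C1P b1) -(def_pblock trivP C2P b2).
Qed.

Lemma sum_w (T : finType) (gs S : {set T}) (a b : nat) :
  \sum_(p in S) (if p \in gs then b else a) = #|S :&: gs| * b + #|S :\: gs| * a.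
Proof.
rewrite (bigID (fun p => p \in gs)) /=; congr (_ + _).
  rewrite -sum_nat_const; apply: eq_big => [p|p /andP[_ ->]] //; by rewrite !inE andbC.
rewrite -sum_nat_const; apply: eq_big => [p|p /andP[_ /negbTE ->]] //; by rewrite !inE andbC.
Qed.

Lemma subn1_eq m n : n = m.+1 -> m = n - 1.
Proof. by move=> ->; rewrite subn1. Qed.

Theorem theorem3p3 (a b c d t u v : nat) :
  2 <= v -> v <= u - 1 -> t <= u - 1 ->
  RGDD_exists v.+1 [:: (u, v.+1)] ->
  GDD_exists 4 [:: (a, u); (d, 1)] ->
  GDD_exists 4 [:: (b, u); (d, 1)] ->
  (0 < t * c -> GDD_exists 4 [:: (a, v); (b, 1); (c, 1)]) ->
  (c = 0 \/ t < u - 1 -> GDD_exists 4 [:: (a, v); (b, 1)]) ->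
  GDD_exists 4 [:: (v * a + b, u); (c * t + d, 1)].
Proof.
move=> hv hvu htu [G0 [B0 [gdd0 [P [partP clsP]]]]] [GA [BA gA]] [GB [BB gB]] hC hD.
have u3 : 2 < u by lia.
have u0 : 0 < u by lia.
have gdd0' := gdd0; case: gdd0' => partG sizesG [B0n B0k] H1 H2.
have /and3P[/eqP covG trivG _] := partG.
have /and3P[/eqP covP trivP _] := partP.
have [Gsz GN] := gdd_groups u0 gdd0.
have tp : type_points [:: (u, v.+1)] = u * v.+1 by rewrite /type_points big_seq1.
have tp0 : 0 < type_points [:: (u, v.+1)] by rewrite tp muln_gt0 u0.
pose x0 := Ordinal tp0.
pose gs := pblock G0 x0.
have gsG : gs \in G0 by rewrite pblock_mem // covG inE.
have [g' g'G g'ne] : exists2 g', g' \in G0 & g' != gs.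
  have : 0 < #|G0 :\ gs| by move: (cardsD1 gs G0); rewrite gsG GN add1n => [[<-]]; apply: leq_trans hv.
  by case/card_gt0P => g'; rewrite in_setD1 => /andP[ne gG]; exists g'.
have x0g' : x0 \notin g'.
  by apply: contra g'ne => xg; rewrite /gs (def_pblock trivG g'G xg).
have NP : #|P| = u by rewrite (count_classes gdd0 GN partP clsP g'G x0g') Gsz.
have [P0 P0P] : exists P0, P0 \in P by apply/card_gt0P; rewrite NP.
pose Q := enum (P :\ P0).
have sQ : size Q = u - 1 by rewrite -cardE; move: (cardsD1 P0 P); rewrite P0P NP add1n => e; apply: subn1_eq.
pose w p := if p \in gs then b else a.
have pstar be : be \in B0 -> exists p, [/\ p \in be, p \in gs & forall q, q \in be -> q \in gs -> q = p].
  move=> beB; have [p pb pg] := block_meets gdd0 GN beB gsG.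
  exists p; split => // q qb qg; exact: (block_meets_uniq gdd0 beB gsG qb qg pb pg).
have FGex : forall g : {set 'I_(type_points [:: (u, v.+1)])},
    exists F : {set {set Pt w t c d}}, g \in G0 -> plgdd (labG g) 4 F /\ F != set0.
  move=> g; case: (boolP (g \in G0)) => gG; last by exists set0.
  pose ks := [seq Some (inl p) | p <- enum g] ++ [:: Some (inr tt)].
  have uks : uniq ks.
    rewrite cat_uniq map_inj_uniq ?enum_uniq /=; last by move=> p q [->].
    by rewrite orbF andbT; apply/mapP => [[p _]].
  have nks : None \notin ks by rewrite /ks mem_cat negb_or inE andbT; apply/mapP => [[p _]].
  have cks (x : Pt w t c d) : labG g x != None -> labG g x \in ks.
    case: x => [[s|kj]|e] //=; last by rewrite /ks mem_cat inE eqxx orbT.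
    case: ifP => // sg _; rewrite /ks mem_cat; apply/orP; left; apply: map_f; by rewrite mem_enum.
  have wg p : p \in g -> w p = (if g == gs then b else a).
    move=> pg; rewrite /w; case: eqP => [<-|ne]; first by rewrite pg.
    case: ifP => // pgs; case: ne; by rewrite -(def_pblock trivG gG pg) (def_pblock trivG gsG pgs).
  have mks : [seq #|[set x : Pt w t c d | labG g x == o]| | o <- ks] = nseq u (if g == gs then b else a) ++ [:: d].
    rewrite /ks map_cat /= fiberGd -map_comp; congr (_ ++ _).
    rewrite (map_const_in (y := if g == gs then b else a)) ?size_map -?cardE ?Gsz //.
    by move=> p; rewrite mem_enum => pg /=; rewrite fiberG // wg.
  case: eqP mks => [_|_] mks.
  - have [F pF Fn] : exists2 F : {set {set Pt w t c d}}, plgdd (labG g) 4 F & F != set0.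
      apply: (@embed 4 _ _ _ _ _ _ (labG g) ks isT gB uks nks cks).
      by rewrite mks /type_sizes /=.
    by exists F.
  - have [F pF Fn] : exists2 F : {set {set Pt w t c d}}, plgdd (labG g) 4 F & F != set0.
      apply: (@embed 4 _ _ _ _ _ _ (labG g) ks isT gA uks nks cks).
      by rewrite mks /type_sizes /=.
    by exists F.
have FBex : forall be : {set 'I_(type_points [:: (u, v.+1)])},
    exists F : {set {set Pt w t c d}}, be \in B0 :\: P0 -> plgdd (labB P Q be) 4 F.
  move=> be; case: (boolP (be \in B0 :\: P0)) => beD; last by exists set0.
  move: (beD); rewrite inE => /andP[beP0 beB].
  pose ks := [seq Some (inl p) | p <- enum be] ++ [:: Some (inr tt)].
  have uks : uniq ks.
    rewrite /ks cat_uniq map_inj_uniq ?enum_uniq /=; last by move=> p q [->].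
    by rewrite orbF andbT; apply/mapP => [[p _]].
  have nks : None \notin ks by rewrite /ks mem_cat negb_or inE andbT; apply/mapP => [[p _]].
  have cks (x : Pt w t c d) : labB P Q be x != None -> labB P Q be x \in ks.
    case: x => [[s|kj]|e] //=.
      case: ifP => // sg _; rewrite /ks mem_cat; apply/orP; left; apply: map_f; by rewrite mem_enum.
    by case: ifP => // _ _; rewrite /ks mem_cat inE eqxx orbT.
  pose idx := index (pblock P be) Q.
  have idxlt : idx < u - 1.
    rewrite -sQ /idx index_mem /Q mem_enum in_setD1 pblock_mem ?covP // andbT.
    apply: contraNneq beP0 => <-; by rewrite mem_pblock covP.
  have [ps [psb psg psu]] := pstar be beB.
  have hs : size (rem ps (enum be)) = v by rewrite size_rem ?mem_enum // -cardE B0k.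
  have pw : perm_eq (map w (enum be)) (b :: nseq v a).
    have := perm_to_rem (_ : ps \in enum be); rewrite mem_enum => /(_ psb) /(perm_map w) pe.
    apply: (perm_trans pe); rewrite /= {1}/w psg perm_cons.
    rewrite (map_const_in (y := a)) ?hs // => q.
    rewrite rem_filter ?enum_uniq // mem_filter mem_enum => /andP[/= qps qb].
    rewrite /w ifF //; apply: negbTE; apply: contra qps => qg; by rewrite (psu q qb qg).
  have mks : [seq #|[set x : Pt w t c d | labB P Q be x == o]| | o <- ks] =
      map w (enum be) ++ [:: (idx < t) * c].
    rewrite /ks map_cat /= fiberBc -map_comp; congr (_ ++ _).
    by apply/eq_in_map => p; rewrite mem_enum => pb /=; rewrite fiberB.
  case: (boolP ((idx < t) && (0 < c))) => [/andP[lt cpos]|hn].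
  - have tc0 : 0 < t * c by rewrite muln_gt0 cpos andbT; exact: leq_ltn_trans (leq0n idx) lt.
    have [GC [BC gC]] := hC tc0.
    have [F pF _] : exists2 F : {set {set Pt w t c d}}, plgdd (labB P Q be) 4 F & F != set0.
      apply: (@embed 4 _ _ _ _ _ _ (labB P Q be) ks isT gC uks nks cks).
      rewrite mks lt mul1n /type_sizes /=; apply: perm_filter.
      rewrite -(cat1s b) -(cat1s c); apply: (perm_trans (perm_cat pw (perm_refl _))).
      by rewrite -cat1s -catA perm_catCA.
    by exists F.
  - have c0 : (idx < t) * c = 0.
      move: hn; rewrite negb_and => /orP[h|h]; first by rewrite (negbTE h).
      by move: h; rewrite lt0n negbK => /eqP ->; rewrite muln0.
    have [GD [BD gD]] : GDD_exists 4 [:: (a, v); (b, 1)].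
      apply: hD; case: (posnP c) => [->|cpos]; first by left.
      right; move: hn; rewrite cpos andbT -leqNgt => ti; exact: leq_ltn_trans ti idxlt.
    have [F pF _] : exists2 F : {set {set Pt w t c d}}, plgdd (labB P Q be) 4 F & F != set0.
      apply: (@embed 4 _ _ _ _ _ _ (labB P Q be) ks isT gD uks nks cks).
      rewrite mks c0 /type_sizes /= filter_cat /= cats0; apply: perm_filter.
      by apply: (perm_trans pw); rewrite -cat1s perm_catC.
    by exists F.
have [FG FGp] := fin_all_exists FGex.
have [FB FBp] := fin_all_exists FBex.
have tQ : t <= size (enum (P :\ P0)) by rewrite -/Q sQ.
have pl := assemble (k := 4) partG H1 H2 partP clsP P0P tQ (fun g gG => (FGp g gG).1) FBp.
have /and3P[/eqP covP0 trivP0 _] := clsP _ P0P.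
have P0B be : be \in P0 -> be \in B0 by move=> bP; rewrite -covP; apply/bigcupP; exists P0.
have sumbe be : be \in B0 -> \sum_(p in be) w p = v * a + b.
  move=> beB; rewrite sum_w.
  have [ps [psb psg psu]] := pstar be beB.
  have e1 : be :&: gs = [set ps].
    apply/setP => q; rewrite !inE; apply/andP/eqP => [[qb qg]|->]; first exact: psu.
    by rewrite psb psg.
  have := cardsID gs be; rewrite e1 cards1 (B0k be beB) add1n => [[e2]].
  rewrite e2.
  by rewrite mul1n addnC mulnC.
have cP0 : #|P0| = u.
  have cT : #|[set: 'I_(type_points [:: (u, v.+1)])]| = u * v.+1.
    by rewrite cardsT card_ord; exact: tp.
  have := card_partition (clsP _ P0P); rewrite cT.
  rewrite (eq_bigr (fun _ => v.+1)); last by move=> be bP; rewrite B0k // P0B.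
  by rewrite sum_nat_const => /eqP; rewrite eqn_pmul2r // => /eqP <-.
pose ks := [seq Some be | be <- enum P0] ++ [:: None].
apply: (@finalize 4 _ (Pt w t c d) _ (labF P0) _ ks pl).
- have [bb bbF] : exists bb, bb \in FG gs by apply/set0Pn; exact: (FGp gs gsG).2.
  by apply/set0Pn; exists bb; rewrite inE; apply/orP; left; apply/bigcupP; exists gs.
- rewrite /ks cat_uniq map_inj_uniq ?enum_uniq /=; last by move=> x y [].
  by rewrite orbF andbT; apply/mapP => [[p _]].
- case=> [[s|kj]|e] /=; rewrite /ks mem_cat ?inE ?eqxx ?orbT //.
  by apply/orP; left; apply: map_f; rewrite mem_enum pblock_mem // covP0 inE.
- rewrite /ks map_cat /= fiberFN -map_comp.
  rewrite (map_const_in (y := v * a + b)) ?size_map -?cardE ?cP0; last first.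
    move=> be; rewrite mem_enum => bP /=; rewrite fiberF.
    rewrite -(sumbe be (P0B _ bP)); apply: eq_bigl => p; rewrite inE.
    apply/eqP/idP => [<-|pb]; first by rewrite mem_pblock covP0 inE.
    exact: def_pblock trivP0 bP pb.
  by rewrite /type_sizes /= (mulnC c t).
- have cT' : #|{: 'I_(type_points [:: (u, v.+1)])}| = u * v.+1 by rewrite card_ord; exact: tp.
  have cgs : #|~: gs| = u * v.
    by have := cardsC gs; rewrite cT' Gsz // mulnS => /addnI.
  have sw : \sum_p w p = u * b + (u * v) * a.
    rewrite (_ : \sum_p w p = \sum_(p in [set: 'I_(type_points [:: (u, v.+1)])]) w p); last first.
      by apply: eq_bigl => p; rewrite inE.
    by rewrite sum_w setTI setTD Gsz // cgs.
  rewrite card_Pt sw.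
  have -> : type_points [:: (v * a + b, u); (c * t + d, 1)] = (v * a + b) * u + (c * t + d).
    by rewrite /type_points !big_cons big_nil muln1 addn0.
  ring.
Qed.
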